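(* Let $h_1,h_2$ be real numbers. The polynomial $h(t)=1+h_1t+h_2t^2+h_1t^3+t^4$ has only real negative roots if and only if $h_2-2h_1+2\geq0$, $h_1^2-4(h_2-2)\geq0$, and $h_1\geq4$. *)

(* Defs.v *)
From HB Require Import structures.
From mathcomp Require Import all_boot all_order all_algebra.
From mathcomp Require Import complex.
From mathcomp Require Import reals.
Set Implicit Arguments. Unset Strict Implicit. Unset Printing Implicit Defensive.
Import Order.TTheory GRing.Theory Num.Theory.
Local Open Scope ring_scope.

Definition hpoly (R : ringType) (h1 h2 : R) : {poly R} :=
  1 + h1 *: 'X + h2 *: 'X^2 + h1 *: 'X^3 + 'X^4.

Definition only_real_negative_roots (R : rcfType) (p : {poly R}) : Prop :=
  forall z : R[i], root (map_poly (real_complex R) p) z ->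
    complex.Im z = 0 /\ complex.Re z < 0.

(* Main.v *)
Require Import Defs.
From HB Require Import structures.
From mathcomp Require Import all_boot all_order all_algebra.
From mathcomp Require Import complex.
From mathcomp Require Import reals.
From mathcomp Require Import ring lra.
Import Order.TTheory GRing.Theory Num.Theory.
Local Open Scope ring_scope.
Local Open Scope complex_scope.

Section S.
Variable R : rcfType.
Local Notation C := R[i].

Lemma eval_h (h1 h2 : R) (z : C) :
  (map_poly (real_complex R) (hpoly h1 h2)).[z] =
  1 + h1%:C * z + h2%:C * z ^+ 2 + h1%:C * z ^+ 3 + z ^+ 4.
Proof.
rewrite /hpoly !rmorphD /= !map_polyZ !map_polyXn map_polyX rmorph1 !hornerE /=.
ring. Qed.

Lemma quad_neg (s : R) (z : C) : s <= -2 ->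
  z ^+ 2 - s%:C * z + 1 = 0 -> complex.Im z = 0 /\ complex.Re z < 0.
Proof.
move=> hs hz.
have hD : 0 <= s ^+ 2 - 4 by nra.
set e := Num.sqrt (s ^+ 2 - 4).
have he : e ^+ 2 = s ^+ 2 - 4 by rewrite sqr_sqrtr.
have e0 : 0 <= e by rewrite sqrtr_ge0.
set t1 := (s + e) / 2. set t2 := (s - e) / 2.
have hsum : t1 + t2 = s by rewrite /t1 /t2; field.
have hprod : t1 * t2 = 1.
  rewrite /t1 /t2. have -> : (s + e) / 2 * ((s - e) / 2) = (s ^+ 2 - e ^+ 2) / 4 by field.
  by rewrite he; field.
have t1n : t1 < 0 by rewrite /t1; nra.
have t2n : t2 < 0 by rewrite /t2; nra.
have fac : (z - t1%:C) * (z - t2%:C) = 0.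
  have -> : (z - t1%:C) * (z - t2%:C) = z ^+ 2 - (t1%:C + t2%:C) * z + t1%:C * t2%:C by ring.
  by rewrite -rmorphD -rmorphM hsum hprod.
move/eqP: fac; rewrite mulf_eq0 !subr_eq0 => /orP [] /eqP -> /=; split => //.
Qed.

Lemma w_real (w : C) :
  (forall z : C, z ^+ 2 - w * z + 1 = 0 -> complex.Im z = 0 /\ complex.Re z < 0) ->
  exists s : R, w = s%:C /\ s <= -2.
Proof.
move=> H.
set r := sqrtc (w ^+ 2 - 4).
have hr : r ^+ 2 = w ^+ 2 - 4 by rewrite sqr_sqrtc.
set z1 := (w + r) / 2.
have hz1 : z1 ^+ 2 - w * z1 + 1 = 0.
  have -> : z1 ^+ 2 - w * z1 + 1 = (r ^+ 2 - w ^+ 2 + 4) / 4 by rewrite /z1; field.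
  by rewrite hr; field.
set z2 := w - z1.
have hz2 : z2 ^+ 2 - w * z2 + 1 = 0.
  by rewrite -hz1 /z2; ring.
have hp : z1 * z2 = 1.
  apply/eqP; rewrite -subr_eq0; apply/eqP; rewrite -oppr0 -hz1 /z2; ring.
have real_of (z : C) : complex.Im z = 0 -> z = (complex.Re z)%:C by case: z => a b /= ->.
case: (H _ hz1) => i1 n1. case: (H _ hz2) => i2 n2.
have ew : w = (complex.Re z1 + complex.Re z2)%:C.
  by rewrite rmorphD /= -(real_of z1 i1) -(real_of z2 i2) /z2; ring.
have ep : complex.Re z1 * complex.Re z2 = 1.
  apply: complexI; by rewrite rmorphM /= -(real_of z1 i1) -(real_of z2 i2).
exists (complex.Re z1 + complex.Re z2); split => //.
set a := complex.Re z1 in n1 ep *. set b := complex.Re z2 in n2 ep *.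
have sq : 4 <= (a + b) ^+ 2.
  have h0 := sqr_ge0 (a - b).
  have -> : (a + b) ^+ 2 = (a - b) ^+ 2 + 4 * (a * b) by ring.
  rewrite ep; lra.
have hab : a + b < 0 by lra.
nra.
Qed.

Lemma key (h1 h2 : R) (z w : C) :
  (map_poly (real_complex R) (hpoly h1 h2)).[z] =
  z ^+ 2 * (w ^+ 2 + h1%:C * w + (h2 - 2)%:C) +
  (z ^+ 2 - w * z + 1) * (z ^+ 2 + w * z + 1 + h1%:C * z).
Proof. rewrite eval_h rmorphB /=. rewrite rmorph_nat. ring. Qed.

End S.

Theorem lemma3p2p3 (R : realType) (h1 h2 : R) :
  only_real_negative_roots (hpoly h1 h2) <->
  [/\ 0 <= h2 - 2 * h1 + 2, 0 <= h1 ^+ 2 - 4 * (h2 - 2) & 4 <= h1].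
Proof.
split.
- move=> H.
  have Hw (w : R[i]) : w ^+ 2 + h1%:C * w + (h2 - 2)%:C = 0 ->
      exists s : R, w = s%:C /\ s <= -2.
    move=> hw; apply: w_real => z hz; apply: H.
    by rewrite /root (@key _ h1 h2 z w) hw hz !mul0r mulr0 addr0.
  set D := h1 ^+ 2 - 4 * (h2 - 2).
  set r := sqrtc (D%:C).
  have hr : r ^+ 2 = D%:C by rewrite sqr_sqrtc.
  set w1 := (- h1%:C + r) / 2.
  have hw1 : w1 ^+ 2 + h1%:C * w1 + (h2 - 2)%:C = 0.
    have -> : w1 ^+ 2 + h1%:C * w1 + (h2 - 2)%:C =
       (r ^+ 2 - h1%:C ^+ 2) / 4 + (h2 - 2)%:C by rewrite /w1; field.
    rewrite hr /D.
    by field.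
  set w2 := - h1%:C - w1.
  have hw2 : w2 ^+ 2 + h1%:C * w2 + (h2 - 2)%:C = 0.
    by rewrite -hw1 /w2; ring.
  have hp : w1 * w2 = (h2 - 2)%:C.
    apply/eqP; rewrite -subr_eq0; apply/eqP; rewrite -oppr0 -hw1 /w2; ring.
  case: (Hw _ hw1) => s1 [e1 l1]. case: (Hw _ hw2) => s2 [e2 l2].
  have hs : s1 + s2 = - h1.
    apply: complexI; rewrite rmorphD rmorphN /= -e1 -e2 /w2; ring.
  have hq : s1 * s2 = h2 - 2.
    apply: complexI; by rewrite rmorphM /= -e1 -e2.
  have -> : h1 = - (s1 + s2) by lra.
  have -> : h2 = s1 * s2 + 2 by lra.
  rewrite /D; split.
  + have -> : s1 * s2 + 2 - 2 * - (s1 + s2) + 2 = (s1 + 2) * (s2 + 2) by ring.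
    rewrite -mulrNN; apply: mulr_ge0; lra.
    have -> : h1 ^+ 2 - 4 * (h2 - 2) = (s1 - s2) ^+ 2 by rewrite -hq -[h1]opprK -hs; ring.
    exact: sqr_ge0.
  + lra.
- case=> c1 c2 c3 z.
  set d := Num.sqrt (h1 ^+ 2 - 4 * (h2 - 2)).
  have hd : d ^+ 2 = h1 ^+ 2 - 4 * (h2 - 2) by rewrite sqr_sqrtr.
  have d0 : 0 <= d by rewrite sqrtr_ge0.
  set s1 := (- h1 + d) / 2. set s2 := (- h1 - d) / 2.
  have hdle : d <= h1 - 4.
    rewrite -(ler_pXn2r (n := 2)) //; rewrite ?nnegrE //; last by lra.
    rewrite hd; nra.
  have l1 : s1 <= -2 by rewrite /s1; lra.
  have l2 : s2 <= -2 by rewrite /s2; lra.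
  rewrite /root eval_h => /eqP hz.
  have fac : (z ^+ 2 - s1%:C * z + 1) * (z ^+ 2 - s2%:C * z + 1) = 0.
    rewrite -hz.
    have -> : (z ^+ 2 - s1%:C * z + 1) * (z ^+ 2 - s2%:C * z + 1) =
      z ^+ 4 - (s1 + s2)%:C * z ^+ 3 + (2 + s1 * s2)%:C * z ^+ 2 - (s1 + s2)%:C * z + 1.
      ring.
    have -> : s1 + s2 = - h1 by rewrite /s1 /s2; field.
    have -> : 2 + s1 * s2 = h2.
      have -> : 2 + s1 * s2 = 2 + (h1 ^+ 2 - d ^+ 2) / 4 by rewrite /s1 /s2; field.
      by rewrite hd; field.
    ring.
  move/eqP: fac; rewrite mulf_eq0 => /orP [] /eqP.
  + exact: quad_neg.
  + exact: quad_neg.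
Qed.
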